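(* Let $M$ be a finite set, let $\mathcal{X}\subseteq\mathcal{P}(M)$ be a closure system on $M$, and let $\mathcal{M}=\{N_i\mid i\in I\}\subseteq\mathcal{P}(M)$ be a consortial domain on $M$. If $\mathcal{M}$ is closed under (pairwise) intersection, then the set $\bigcup_{N\in\mathcal{M}}\mathcal{X}_N$ is closed under (pairwise) intersection.
   Context: A closure system on $M$ is a family of subsets of $M$ containing $M$ and closed under intersections. A consortial domain on $M$ is a family $\mathcal{M}=\{N_i\mid i\in I\}\subseteq\mathcal{P}(M)$ with $\bigcup_{i\in I}N_i=M$. For $N\subseteq M$, $\mathcal{X}_N:=\{X\cap N\mid X\in\mathcal{X}\}$. *)

(* Defs.v *)
From mathcomp Require Import all_boot.
Set Implicit Arguments. Unset Strict Implicit. Unset Printing Implicit Defensive.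

(* A closure system on M: a family of subsets of M containing M and closed
   under intersections of arbitrary subfamilies (the empty intersection
   being M). *)
Definition closure_system (T : finType) (M : {set T}) (X : {set {set T}}) :=
  [/\ X \subset powerset M, M \in X &
      forall F : {set {set T}}, F \subset X ->
        M :&: \bigcap_(Y in F) Y \in X].

Definition consortial_domain (T : finType) (M : {set T}) (MM : {set {set T}}) :=
  MM \subset powerset M /\ \bigcup_(N in MM) N = M.

Definition restr (T : finType) (X : {set {set T}}) (N : {set T}) : {set {set T}} :=
  [set Y :&: N | Y in X].

Definition closed_under_pairwise_intersection (T : finType) (F : {set {set T}}) :=
  forall A B, A \in F -> B \in F -> A :&: B \in F.

(* Main.v *)
Require Import Defs.
From mathcomp Require Import all_boot.

Theorem mainTheorem2 (T : finType) (M : {set T}) (X MM : {set {set T}}) :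
  closure_system M X -> consortial_domain M MM ->
  closed_under_pairwise_intersection MM ->
  closed_under_pairwise_intersection (\bigcup_(N in MM) restr X N).
Proof.
move=> [XP MX Xcap] [MMP _] MMcap A B /bigcupP [N1 N1M] /imsetP [Y1 Y1X ->]
  /bigcupP [N2 N2M] /imsetP [Y2 Y2X ->].
apply/bigcupP; exists (N1 :&: N2); first exact: MMcap.
apply/imsetP; exists (M :&: \bigcap_(Y in [set Y1; Y2]) Y).
  by apply: Xcap; apply/subsetP => Y; rewrite !inE => /orP [] /eqP ->.
have sN1 : N1 \subset M by move/subsetP: MMP => /(_ _ N1M); rewrite inE.
apply/setP => x; rewrite !inE.
apply/idP/idP.
  move=> /andP [/andP [xY1 xN1] /andP [xY2 xN2]].
  rewrite xN1 xN2 (subsetP sN1 _ xN1) /= andbT.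
  by apply/bigcapP => Y; rewrite !inE => /orP [] /eqP ->.
move=> /andP [/andP [xM /bigcapP H] /andP [xN1 xN2]].
by rewrite xN1 xN2 (H Y1) ?(H Y2) // !inE eqxx ?orbT.
Qed.
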